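(* Under the network setting of the context, after a suitable relabeling of the classes $\mathcal I$, there exist a lower-triangular matrix $B_1\in\mathbb R^{I\times I}$ with strictly positive diagonal entries and a matrix $B_2\in\mathbb R^{I\times J}$ such that for all $x\in\mathbb R^I$ and $u=(u^c,u^s)\in\mathbb U$, $$b(x,u)=-B_1\big(x-(e\cdot x)^+u^c\big)+(e\cdot x)^-B_2u^s-(e\cdot x)^+\Gamma u^c+\ell,$$ where $\Gamma=\operatorname{diag}(\gamma_1,\dots,\gamma_I)$.
   Context: Network setting. Let $\mathcal I=\{1,\dots,I\}$ (customer classes), $\mathcal J=\{1,\dots,J\}$ (server pools), and let $\mathcal G$ be a bipartite graph on $\mathcal I\cup\mathcal J$ with edge set $\mathcal E\subset\mathcal I\times\mathcal J$ (write $i\sim j$ if $(i,j)\in\mathcal E$) which is a tree; $\mathcal J(i)=\{j:i\sim j\}$. Given constants $\lambda_i>0$, $\gamma_i\ge0$, $\ell_i\in\mathbb R$ for $i\in\mathcal I$, and $\mu_{ij}>0$ if $i\sim j$, $\mu_{ij}=0$ otherwise. $e$ denotes the all-ones vector, $a^+=\max(a,0)$, $a^-=-\min(a,0)$. For $(\alpha,\beta)\in\mathbb R^I\times\mathbb R^J$ with $e\cdot\alpha=e\cdot\beta$, $G(\alpha,\beta)$ is the unique matrix $\psi\in\mathbb R^{I\times J}$ with $\sum_j\psi_{ij}=\alpha_i$ for all $i$, $\sum_i\psi_{ij}=\beta_j$ for all $j$, and $\psi_{ij}=0$ whenever $i\not\sim j$ (existence and uniqueness hold since $\mathcal G$ is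 a tree). Action set $\mathbb U=\{u=(u^c,u^s)\in\mathbb R^I_+\times\mathbb R^J_+: e\cdot u^c=e\cdot u^s=1\}$. For $x\in\mathbb R^I$, $u\in\mathbb U$: $\hat G[u](x)=G\big(x-(e\cdot x)^+u^c,\,-(e\cdot x)^-u^s\big)$ and the drift $b_i(x,u)=-\sum_{j\in\mathcal J(i)}\mu_{ij}\hat G_{ij}[u](x)-\gamma_i(e\cdot x)^+u^c_i+\ell_i$, $i\in\mathcal I$. *)

(* Defs.v *)
From HB Require Import structures.
From mathcomp Require Import all_boot all_order all_algebra.
From Stdlib Require Import ClassicalEpsilon.
Set Implicit Arguments. Unset Strict Implicit. Unset Printing Implicit Defensive.
Import Order.TTheory GRing.Theory Num.Theory.
Local Open Scope ring_scope.

Section Network.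
Variables (R : realFieldType) (nI nJ : nat).

Definition gadj (E : 'I_nI -> 'I_nJ -> bool) : rel ('I_nI + 'I_nJ)%type :=
  fun v w => match v, w with
             | inl i, inr j => E i j
             | inr j, inl i => E i j
             | _, _ => false
             end.

Definition remove_edge (E : 'I_nI -> 'I_nJ -> bool) i0 j0 : 'I_nI -> 'I_nJ -> bool :=
  fun i j => E i j && ~~ ((i == i0) && (j == j0)).

(* Tree: connected and acyclic; acyclicity expressed as "every edge is a
   bridge" (an edge lies on no cycle iff its removal disconnects its ends). *)
Definition is_tree (E : 'I_nI -> 'I_nJ -> bool) : Prop :=
  (forall v w, connect (gadj E) v w) /\
  (forall i j, E i j -> ~~ connect (gadj (remove_edge E i j)) (inl i) (inr j)).

Definition esum n (x : 'cV[R]_n) : R := \sum_(k < n) x k 0.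
Definition pospart (a : R) : R := Num.max a 0.
Definition negpart (a : R) : R := - Num.min a 0.

Definition isG (E : 'I_nI -> 'I_nJ -> bool) (alpha : 'cV[R]_nI) (beta : 'cV[R]_nJ)
  (psi : 'M[R]_(nI, nJ)) : Prop :=
  (forall i, \sum_(j < nJ) psi i j = alpha i 0) /\
  (forall j, \sum_(i < nI) psi i j = beta j 0) /\
  (forall i j, ~~ E i j -> psi i j = 0).

(* G(alpha, beta): "the unique matrix" satisfying the constraints (definite
   description via Hilbert's epsilon). *)
Definition Gmat E (alpha : 'cV[R]_nI) (beta : 'cV[R]_nJ) : 'M[R]_(nI, nJ) :=
  epsilon (inhabits 0) (isG E alpha beta).

Definition inU (uc : 'cV[R]_nI) (us : 'cV[R]_nJ) : Prop :=
  (forall i, 0 <= uc i 0) /\ (forall j, 0 <= us j 0) /\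
  esum uc = 1 /\ esum us = 1.

Definition Ghat E (x uc : 'cV[R]_nI) (us : 'cV[R]_nJ) : 'M[R]_(nI, nJ) :=
  Gmat E (x - pospart (esum x) *: uc) (- (negpart (esum x) *: us)).

Definition drift E (mu : 'M[R]_(nI, nJ)) (gam ell : 'cV[R]_nI)
  (x uc : 'cV[R]_nI) (us : 'cV[R]_nJ) : 'cV[R]_nI :=
  \col_i (- (\sum_(j < nJ | E i j) mu i j * Ghat E x uc us i j)
          - gam i 0 * pospart (esum x) * uc i 0 + ell i 0).

End Network.

(* Main.v *)
Require Import Defs.
From HB Require Import structures.
From mathcomp Require Import all_boot all_order all_algebra all_fingroup.
From mathcomp Require Import ring lra.
From Stdlib Require Import ClassicalEpsilon.
Import Order.TTheory GRing.Theory Num.Theory.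
Local Open Scope ring_scope.

Module Helpers.
Set Implicit Arguments. Unset Strict Implicit. Unset Printing Implicit Defensive.

Section Graph.
Variables (nI nJ : nat).
Local Notation V := ('I_nI + 'I_nJ)%type.

Definition rmv (E : 'I_nI -> 'I_nJ -> bool) (k : 'I_nI) : 'I_nI -> 'I_nJ -> bool :=
  fun i j => E i j && (i != k).

Lemma gadj_sym (F : 'I_nI -> 'I_nJ -> bool) : symmetric (gadj F).
Proof. by move=> [i|j] [i'|j']. Qed.

Lemma gadj_sub_in (F F' : 'I_nI -> 'I_nJ -> bool) (P : pred V) :
  (forall i j, inl i \in P -> F i j -> F' i j) -> {in P &, subrel (gadj F) (gadj F')}.
Proof.
move=> H [i|j] [i'|j'] //= Px Py; first exact: H.
exact: H.
Qed.

Lemma path_connect (F F' : 'I_nI -> 'I_nJ -> bool) (P : pred V) x p :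
  (forall i j, inl i \in P -> F i j -> F' i j) -> all P (x :: p) ->
  path (gadj F) x p -> connect (gadj F') x (last x p).
Proof.
move=> H aP pp; apply/connectP; exists p => //.
exact: (sub_in_path (gadj_sub_in H) aP pp).
Qed.

Lemma all_notin (x : V) s : x \notin s -> all (predC1 x) s.
Proof. move=> H; apply/allP => y Hy /=; apply/eqP => e; subst; by rewrite Hy in H. Qed.

Lemma split_at (x0 x : V) p : x \in x0 :: p -> exists p1 p2, p = p1 ++ p2 /\ last x0 p1 = x.
Proof. by case/splitPl => p1 p2 Hl; exists p1, p2. Qed.

Variable E : 'I_nI -> 'I_nJ -> bool.
Variable r : V.

Lemma S_sub i i' v :
  ~~ connect (gadj (rmv E i)) (inl i') r ->
  ~~ connect (gadj (rmv E i')) v r -> ~~ connect (gadj (rmv E i)) v r.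
Proof.
move=> Hi'; apply: contra => /connectP [p pp Hr].
case: (boolP (inl i' \in v :: p)) => Hin.
  case: (split_at Hin) => p1 [p2 [Ep Hl]]; rewrite Ep cat_path in pp; case/andP: pp => _ pp2.
  move/negP: Hi'; case; rewrite Hr Ep last_cat -Hl.
  by apply/connectP; exists p2.
rewrite Hr.
apply: (path_connect (F := rmv E i) (P := predC1 (inl i'))) => //.
  move=> i0 j /= Hi0 /andP [Hij _]; rewrite /rmv Hij /=.
  by apply: contra Hi0 => /eqP ->.
move: Hin; rewrite in_cons negb_or => /andP [H1 H2] /=.
by rewrite eq_sym H1 /= all_notin.
Qed.

Lemma S_asym i i' : is_tree E -> i != i' ->
  ~~ connect (gadj (rmv E i)) (inl i') r -> connect (gadj (rmv E i')) (inl i) r.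
Proof.
move=> [Hc _] nii Hi'.
have /connectP [p pp Hr] := Hc (inl i) r.
case/shortenP: pp Hr => p' pp' up' _ Hr.
case: (boolP (inl i' \in inl i :: p')) => Hin.
  case: (split_at Hin) => p1 [p2 [Ep Hl]]; rewrite Ep in pp' up' Hr.
  move: up'; rewrite cat_path in pp'; case/andP: pp' => _ pp2 up.
  rewrite Hl in pp2.
  move/negP: Hi'; case.
  rewrite Hr last_cat Hl.
  apply: (path_connect (F := E) (P := predC1 (inl i))) => //.
    move=> i0 j /= Hi0 Hij; rewrite /rmv Hij /=.
    by apply: contra Hi0 => /eqP ->.
  rewrite /= -Hl.
  move: up; rewrite /= mem_cat negb_or => /andP [/andP [H1 H2] _].
  have -> : (last (inl i) p1 != inl i).
    rewrite Hl; apply/eqP => [[]] /eqP; by rewrite eq_sym (negbTE nii).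
  by rewrite /= all_notin.
rewrite Hr.
apply: (path_connect (F := E) (P := predC1 (inl i'))) => //.
  move=> i0 j /= Hi0 Hij; rewrite /rmv Hij /=.
  by apply: contra Hi0 => /eqP ->.
move: Hin; rewrite in_cons negb_or => /andP [H1 H2] /=.
by rewrite eq_sym H1 /= all_notin.
Qed.

Lemma diag_edge i : is_tree E -> r != inl i ->
  exists2 j, E i j & ~~ connect (gadj (remove_edge E i j)) (inl i) r.
Proof.
move=> [Hc Ht] nri.
have /connectP [p pp Hr] := Hc (inl i) r.
case/shortenP: pp Hr => p' pp' up' _ Hr.
case: p' pp' up' Hr => [|w p''] /=; first by move=> _ _ Hr; rewrite Hr eqxx in nri.
case: w => [i1|j] //= /andP [Eij pp] /andP [Hn up] Hr.
exists j => //.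
apply/negP => Hcon.
have Hjr : connect (gadj (remove_edge E i j)) (inr j) r.
  rewrite Hr; apply: (path_connect (F := E) (P := predC1 (inl i))) => //.
    move=> i0 j0 /= Hi0 Hij; rewrite /remove_edge Hij /=.
    by apply: contra Hi0 => /andP [/eqP -> _].
  by rewrite /= all_notin //; move: Hn; rewrite in_cons negb_or => /andP [].
move/negP: (Ht i j Eij); apply.
apply: (connect_trans Hcon).
by rewrite (sym_connect_sym (gadj_sym _)).
Qed.

Lemma C_in_S i j v :
  ~~ connect (gadj (remove_edge E i j)) (inl i) r ->
  connect (gadj (remove_edge E i j)) (inl i) v ->
  ~~ connect (gadj (rmv E i)) v r.
Proof.
move=> Hr Hv; apply: contra Hr => Hvr; apply: (connect_trans Hv).
apply: connect_sub Hvr => x y Hxy; apply: connect1.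
move: x y Hxy => [i0|j0] [i1|j1] //=; rewrite /rmv /remove_edge => /andP [-> H] /=;
  by apply: contra H => /andP [/eqP -> _].
Qed.

Lemma notC_in_S i j v :
  connect (gadj (remove_edge E i j)) (inl i) r ->
  ~~ connect (gadj (remove_edge E i j)) (inl i) v ->
  ~~ connect (gadj (rmv E i)) v r.
Proof.
move=> Hr Hv; apply: contra Hv => Hvr; apply: (connect_trans Hr).
rewrite (sym_connect_sym (gadj_sym _)).
apply: connect_sub Hvr => x y Hxy; apply: connect1.
move: x y Hxy => [i0|j0] [i1|j1] //=; rewrite /rmv /remove_edge => /andP [-> H] /=;
  by apply: contra H => /andP [/eqP -> _].
Qed.

Lemma isolated i : r != inl i -> ~~ connect (gadj (rmv E i)) (inl i) r.
Proof.
move=> nr; apply/negP => /connectP [[|w p] /=]; first by move=> _ e; rewrite e eqxx in nr.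
by case: w => [i1|j] //=; rewrite /rmv eqxx andbF.
Qed.

End Graph.

Lemma sort_perm n (f : 'I_n -> nat) :
  exists s : {perm 'I_n}, forall a b : 'I_n, (a <= b)%N -> (f (s a) <= f (s b))%N.
Proof.
case: n f => [|m] f; first by exists (1%g) => [[]].
set leT := fun a b : 'I_m.+1 => (f a <= f b)%N.
set l := sort leT (enum 'I_m.+1).
have sz : size l = m.+1 by rewrite size_sort size_enum_ord.
have ul : uniq l by rewrite sort_uniq enum_uniq.
have sl : sorted leT l.
  apply: sort_sorted => a b; exact: leq_total.
have inj : injective (fun a : 'I_m.+1 => nth ord0 l a).
  move=> a b /eqP; rewrite nth_uniq ?sz // => /eqP; exact: val_inj.
exists (perm inj) => a b ab; rewrite !permE.
apply: (sorted_leq_nth _ _ ord0 sl) => //; rewrite ?inE ?sz //.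
- move=> y x z; exact: leq_trans.
- move=> x; exact: leqnn.
Qed.

Section Exist.
Variables (R : realFieldType) (nI nJ : nat) (E : 'I_nI -> 'I_nJ -> bool).
Local Notation V := ('I_nI + 'I_nJ)%type.

Definition Dv (psi : 'M[R]_(nI, nJ)) (v : V) : R :=
  match v with inl i => \sum_j psi i j | inr j => - \sum_i psi i j end.
Definition supp (psi : 'M[R]_(nI, nJ)) := forall i j, ~~ E i j -> psi i j = 0.
Definition dl (v u : V) : R := (v == u)%:R.

Lemma Dv_add u : {morph (fun psi => Dv psi u) : x y / x + y}.
Proof.
move=> x y; case: u => [i|j] /=.
  by rewrite -big_split; apply: eq_bigr => k _; rewrite mxE.
by rewrite -opprD -big_split; congr (- _); apply: eq_bigr => k _; rewrite mxE.
Qed.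

Lemma Dv_scale a psi u : Dv (a *: psi) u = a * Dv psi u.
Proof.
case: u => [i|j] /=; rewrite ?mulrN mulr_sumr; [|congr (- _)];
  by apply: eq_bigr => k _; rewrite mxE.
Qed.

Lemma Dv_0 u : Dv 0 u = 0.
Proof. by case: u => [i|j] /=; rewrite big1 ?oppr0 // => k _; rewrite mxE. Qed.

Lemma Dv_sum (I : finType) (F : I -> 'M[R]_(nI, nJ)) u :
  Dv (\sum_k F k) u = \sum_k Dv (F k) u.
Proof. exact: (big_morph (fun psi => Dv psi u) (Dv_add u) (Dv_0 u)). Qed.

Lemma good_edge v w : gadj E v w ->
  exists psi, supp psi /\ forall u, Dv psi u = dl v u - dl w u.
Proof.
case: v w => [i|j] [i'|j'] //= Eij.
  exists (delta_mx i j'); split.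
    move=> a b; rewrite mxE; case: (boolP (a == i)) => [/eqP ->|] //=.
    case: (boolP (b == j')) => [/eqP ->|] //=; by rewrite Eij.
  case=> [k|k] /=; rewrite /dl.
    rewrite (bigD1 j') //= big1 ?mxE ?eqxx ?andbT; last first.
      by move=> b nb; rewrite mxE (negbTE nb) andbF.
    by rewrite addr0 subr0 (inj_eq (@inl_inj _ _)) eq_sym.
  rewrite (bigD1 i) //= big1 ?mxE ?eqxx; last first.
    by move=> b nb; rewrite mxE (negbTE nb).
  by rewrite addr0 sub0r (inj_eq (@inr_inj _ _)) eq_sym.
exists (- delta_mx i' j); split.
  move=> a b; rewrite !mxE; case: (boolP (a == i')) => [/eqP ->|] //=; last by rewrite oppr0.
  case: (boolP (b == j)) => [/eqP ->|] //=; last by rewrite oppr0.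
  by rewrite Eij.
case=> [k|k] /=; rewrite /dl.
  rewrite (bigD1 j) //= big1 ?mxE ?eqxx ?andbT; last first.
    by move=> b nb; rewrite !mxE (negbTE nb) andbF oppr0.
  by rewrite addr0 sub0r (inj_eq (@inl_inj _ _)) eq_sym.
rewrite (bigD1 i') //= big1 ?mxE ?eqxx; last first.
  by move=> b nb; rewrite !mxE (negbTE nb) oppr0.
by rewrite addr0 opprK subr0 (inj_eq (@inr_inj _ _)) eq_sym.
Qed.



Lemma good_conn v w : connect (gadj E) v w ->
  exists psi, supp psi /\ forall u, Dv psi u = dl v u - dl w u.
Proof.
case/connectP => p pp ->; elim: p v pp => [|x p IH] v /=.
  by move=> _; exists 0; split => [a b _|u]; rewrite ?mxE ?Dv_0 ?subrr.
case/andP => Hvx pp.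
have [psi1 [s1 D1]] := good_edge Hvx.
have [psi2 [s2 D2]] := IH x pp.
exists (psi1 + psi2); split.
  by move=> a b nab; rewrite mxE s1 ?s2 ?addr0.
by move=> u; rewrite Dv_add D1 D2 addrA subrK.
Qed.

Lemma G_exists (alpha : 'cV[R]_nI) (beta : 'cV[R]_nJ) (r : V) :
  is_tree E -> esum alpha = esum beta -> exists psi, isG E alpha beta psi.
Proof.
move=> [Hc _] Hsum.
pose t (v : V) : R := match v with inl i => alpha i 0 | inr j => - beta j 0 end.
pose P v psi := supp psi /\ forall u, Dv psi u = dl v u - dl r u.
pose F v := epsilon (inhabits 0) (P v).
have HF v : P v (F v) by apply: epsilon_spec; apply: good_conn.
have tsum : \sum_v t v = 0.
  rewrite big_sumType /= sumrN; move: Hsum; rewrite /esum => ->; by rewrite subrr.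
have Dt u : \sum_v t v * dl v u = t u.
  rewrite (bigD1 u) //= big1 ?addr0 /dl ?eqxx ?mulr1 //.
  by move=> v nv; rewrite (negbTE nv) mulr0.
pose psi := \sum_v t v *: F v.
have Dpsi u : Dv psi u = t u.
  rewrite Dv_sum.
  under eq_bigr => v _ do rewrite Dv_scale (proj2 (HF v)) mulrBr.
  by rewrite sumrB Dt -mulr_suml tsum mul0r subr0.
exists psi; split; [|split].
- by move=> i; have := Dpsi (inl i).
- by move=> j; have := Dpsi (inr j) => /= /eqP; rewrite eqr_opp => /eqP.
- move=> i j nij; rewrite summxE big1 // => v _.
  by rewrite mxE (proj1 (HF v)) ?mulr0.
Qed.

End Exist.

Section Cut.
Variables (R : realFieldType) (nI nJ : nat) (E : 'I_nI -> 'I_nJ -> bool).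
Local Notation V := ('I_nI + 'I_nJ)%type.

Definition Cc i j (v : V) := connect (gadj (remove_edge E i j)) (inl i) v.

Lemma cut (psi : 'M[R]_(nI, nJ)) alpha beta i j :
  isG E alpha beta psi -> is_tree E -> E i j ->
  \sum_i' (Cc i j (inl i'))%:R * alpha i' 0 - \sum_j' (Cc i j (inr j'))%:R * beta j' 0
  = psi i j.
Proof.
move=> [Ha [Hb Hs]] [_ Ht] Eij.
under eq_bigr => i' _ do rewrite -Ha mulr_sumr.
under [X in _ - X]eq_bigr => j' _ do rewrite -Hb mulr_sumr.
rewrite [X in _ - X]exchange_big -sumrB.
have term i' j' : (Cc i j (inl i'))%:R * psi i' j' - (Cc i j (inr j'))%:R * psi i' j'
   = if (i' == i) && (j' == j) then psi i j else 0.
  case: (boolP ((i' == i) && (j' == j))) => [/andP [/eqP -> /eqP ->]|nij].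
    by rewrite /Cc connect0 (negbTE (Ht i j Eij)) mul1r mul0r subr0.
  case: (boolP (E i' j')) => Ei'j'; last by rewrite Hs // !mulr0 subrr.
  have adj : gadj (remove_edge E i j) (inl i') (inr j') by rewrite /= /remove_edge Ei'j' nij.
  rewrite /Cc (same_connect1r (sym_connect_sym (gadj_sym _)) adj).
  by rewrite subrr.
transitivity (\sum_i' \sum_j' (if (i' == i) && (j' == j) then psi i j else 0)).
  apply: eq_bigr => i' _; rewrite -(eq_bigr _ (fun j' _ => term i' j')) sumrB //.
rewrite (bigD1 i) //= [X in _ + X]big1; last first.
  move=> i' ni'; rewrite big1 // => j' _; by rewrite (negbTE ni').
rewrite addr0 (bigD1 j) //= big1; last first.
  by move=> j' nj'; rewrite eqxx (negbTE nj').
by rewrite addr0 !eqxx.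
Qed.


Definition cf (r : V) i j v : R := (Cc i j v)%:R - (Cc i j r)%:R.

Lemma psi_formula r (psi : 'M[R]_(nI, nJ)) alpha beta i j :
  isG E alpha beta psi -> is_tree E -> esum alpha = esum beta -> E i j ->
  psi i j = \sum_i' cf r i j (inl i') * alpha i' 0 - \sum_j' cf r i j (inr j') * beta j' 0.
Proof.
move=> HG Ht Hs Eij; rewrite -(cut HG Ht Eij) /cf.
have e1 : \sum_i' ((Cc i j (inl i'))%:R - (Cc i j r)%:R) * alpha i' 0
   = \sum_i' (Cc i j (inl i'))%:R * alpha i' 0 - (Cc i j r)%:R * esum alpha.
  by rewrite /esum mulr_sumr -sumrB; apply: eq_bigr => k _; rewrite mulrBl.
have e2 : \sum_j' ((Cc i j (inr j'))%:R - (Cc i j r)%:R) * beta j' 0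
   = \sum_j' (Cc i j (inr j'))%:R * beta j' 0 - (Cc i j r)%:R * esum beta.
  by rewrite /esum mulr_sumr -sumrB; apply: eq_bigr => k _; rewrite mulrBl.
rewrite e1 e2 Hs; ring.
Qed.

End Cut.
End Helpers.
Import Helpers.

Theorem mainTheorem5 (R : realFieldType) (nI nJ : nat)
  (E : 'I_nI -> 'I_nJ -> bool) (lam gam ell : 'cV[R]_nI) (mu : 'M[R]_(nI, nJ)) :
  is_tree E ->
  (forall i, 0 < lam i 0) ->
  (forall i, 0 <= gam i 0) ->
  (forall i j, E i j -> 0 < mu i j) ->
  (forall i j, ~~ E i j -> mu i j = 0) ->
  exists (sigma : {perm 'I_nI}) (B1 : 'M[R]_nI) (B2 : 'M[R]_(nI, nJ)),
    (forall a b : 'I_nI, (a < b)%N -> B1 (sigma a) (sigma b) = 0) /\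
    (forall i, 0 < B1 i i) /\
    (forall (x uc : 'cV[R]_nI) (us : 'cV[R]_nJ), inU uc us ->
       drift E mu gam ell x uc us =
         - (B1 *m (x - pospart (esum x) *: uc))
         + negpart (esum x) *: (B2 *m us)
         - pospart (esum x) *: (diag_mx gam^T *m uc)
         + ell).
Proof.
move=> Htree _ _ Hmu Hmu0.
case: (boolP (0 < nJ)%N) => [nJpos|nJ0]; last first.
  exists 1%g, 1%:M, 0; split; [|split].
  - by move=> a b ab; rewrite !perm1 mxE -val_eqE /= (ltn_eqF ab).
  - by move=> i; rewrite mxE eqxx ltr01.
  move=> x uc us [_ [_ [_ Hus]]]; exfalso.
  move: Hus; rewrite /esum big1 => [/eqP|k _]; first by rewrite eq_sym oner_eq0.
  exfalso; move: nJ0; rewrite -leqNgt => /(leq_trans (ltn_ord k)); by rewrite ltn0.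
pose r : ('I_nI + 'I_nJ)%type := inr (Ordinal nJpos).
pose s k := #|[set v | ~~ connect (gadj (rmv E k)) v r]|.
have [sig Hsig] := sort_perm s.
pose B1 : 'M[R]_nI := \matrix_(i, i') \sum_(j | E i j) mu i j * cf R E r i j (inl i').
pose B2 : 'M[R]_(nI, nJ) := \matrix_(i, j') - \sum_(j | E i j) mu i j * cf R E r i j (inr j').
have suppB1 i i' : B1 i i' != 0 -> ~~ connect (gadj (rmv E i)) (inl i') r.
  rewrite mxE; apply: contraNN => Hc; apply/eqP; apply: big1 => j Eij.
  rewrite /cf; case: (boolP (Cc E i j r)) => Hr.
    case: (boolP (Cc E i j (inl i'))) => Hv; first by rewrite subrr mulr0.
    by move: (notC_in_S Hr Hv); rewrite Hc.
  case: (boolP (Cc E i j (inl i'))) => Hv; last by rewrite subrr mulr0.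
  by move: (C_in_S Hr Hv); rewrite Hc.
have s_lt i i' : i != i' -> ~~ connect (gadj (rmv E i)) (inl i') r -> (s i' < s i)%N.
  move=> nii Hi'; apply: proper_card; apply/properP; split.
    apply/subsetP => v; rewrite !inE; exact: S_sub.
  exists (inl i); rewrite !inE ?negbK; first exact: isolated.
  by apply: S_asym.
exists sig, B1, B2; split; [|split].
- move=> a b ab; apply/eqP; apply: contraT => nz.
  have ne : sig a != sig b by rewrite (inj_eq perm_inj) -val_eqE /= (ltn_eqF ab).
  have := s_lt _ _ ne (suppB1 _ _ nz).
  have := Hsig a b (ltnW ab).
  by move=> H1 H2; have := leq_ltn_trans H1 H2; rewrite ltnn.
- move=> i; have [j Eij Hr] := diag_edge (r:=r) (i:=i) Htree isT.
  rewrite mxE (bigD1 j) //=.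
  have t0 : 0 < mu i j * cf R E r i j (inl i).
    by rewrite /cf /Cc connect0 (negbTE Hr) subr0 mulr1 Hmu.
  have t1 : 0 <= \sum_(k | E i k && (k != j)) mu i k * cf R E r i k (inl i).
    apply: sumr_ge0 => k /andP [Eik _]; apply: mulr_ge0; first exact: ltW (Hmu _ _ Eik).
    by rewrite /cf /Cc connect0; case: (connect _ _ _); rewrite ?subrr ?subr0.
  lra.
move=> x uc us [uc0 [us0 [Huc Hus]]].
set P := pospart (esum x); set N := negpart (esum x).
have Ea : esum (x - P *: uc) = esum x - P.
  rewrite /esum (eq_bigr (fun k => x k 0 - P * uc k 0)); last by move=> k _; rewrite !mxE.
  by rewrite sumrB -mulr_sumr; move: Huc; rewrite /esum => ->; rewrite mulr1.
have Eb : esum (- (N *: us)) = - N.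
  rewrite /esum (eq_bigr (fun k => - (N * us k 0))); last by move=> k _; rewrite !mxE.
  by rewrite sumrN -mulr_sumr; move: Hus; rewrite /esum => ->; rewrite mulr1.
have Hsum : esum (x - P *: uc) = esum (- (N *: us)).
  rewrite Ea Eb /P /N /pospart /negpart opprK.
  by apply/eqP; rewrite subr_eq addrC addr_max_min addr0.
have HG : isG E (x - P *: uc) (- (N *: us)) (Ghat E x uc us).
  by rewrite /Ghat /Gmat; apply: epsilon_spec; exact: G_exists r Htree Hsum.
apply/matrixP => i k; rewrite [k]ord1 !mxE.
have Hpsi : \sum_(j < nJ | E i j) mu i j * Ghat E x uc us i j =
   \sum_j B1 i j * (x - P *: uc) j 0 - \sum_j (- B2 i j) * (- (N *: us)) j 0.
  under eq_bigr => j Eij do rewrite (psi_formula r HG Htree Hsum Eij) mulrBr.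
  rewrite sumrB; congr (_ - _).
    under [RHS]eq_bigr => i' _ do rewrite mxE mulr_suml.
    rewrite exchange_big /=; apply: eq_bigr => j _; rewrite mulr_sumr.
    by apply: eq_bigr => i' _; rewrite mulrA.
  under [RHS]eq_bigr => j' _ do rewrite mxE opprK mulr_suml.
  rewrite exchange_big /=; apply: eq_bigr => j _; rewrite mulr_sumr.
  by apply: eq_bigr => j' _; rewrite mulrA.
have Hd : \sum_j diag_mx gam^T i j * uc j 0 = gam i 0 * uc i 0.
  rewrite (bigD1 i) //= big1 ?addr0; first by rewrite !mxE eqxx mulr1n.
  by move=> j nj; rewrite mxE eq_sym (negbTE nj) mulr0n mul0r.
have Hb : \sum_j (- B2 i j) * (- (N *: us)) j 0 = N * \sum_j B2 i j * us j 0.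
  rewrite mulr_sumr; apply: eq_bigr => j _; rewrite !mxE mulrNN; ring.
rewrite Hpsi Hd Hb -/P; ring.
Qed.
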